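(* Let $x \in \mathbb{C}$ be close to $0$, and let $p,q$ be the operators acting on functions (power series) $f$ of the variable $z$ defined by $$p(f) = \Big[1 - \mu z - \frac{\mu}{z}\Big] f + \Big(\frac{\mu}{z} - 5\delta\Big) f_{|z=0}, \qquad q(f) = -\sqrt{2}\,\delta\, \partial_z f_{|z=0},$$ where $\mu=\mu(x)$ and $\delta=\delta(x)$ are as in the context. For $(\alpha,\beta) \in \mathbb{C}^2$, the system $$\begin{cases} p(f) - q(g) = \alpha, \\ -q(f) + p(g) = \beta \end{cases}$$ admits a unique solution $(f,g) = \left( \sum_{n=0}^\infty f_n z^n, \sum_{n=0}^\infty g_n z^n \right)$ holomorphic in $|z| < 1$, and this solution is given by $$f = \frac{a\,z_-(\mu)}{\mu} \, \frac{1}{1 - z z_-(\mu)}, \qquad g = \frac{b\,z_-(\mu)}{\mu} \, \frac{1}{1-z z_-(\mu)},$$ where the couple $(a,b)\in \mathbb{C}^2$ is the solution of $$\begin{bmatrix} 1 - 5 \delta \frac{z_-}{\mu} & \sqrt{2}\, \delta \frac{z_-^2}{\mu} \\ \sqrt{2}\, \delta \frac{z_-^2}{\mu} & 1 - 5 \delta\frac{ z_-}{\mu} \end{bmatrix} \begin{bmatrix} a \\ b \end{bmatrix} = \begin{bmatrix} \alpha \\ \beta \end{bmatrix}, \qquad z_- = z_-(\mu).$$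
   Context: Let $r = \frac{\sqrt{2}}{3}$, and for $x$ in the complex disc $\{|x|<r\}$ set $\mu = \mu(x) = \frac{2x}{1 + \frac{x^2}{r^2}}$ and $\delta = \delta(x) = \frac{x^2}{1 + \frac{x^2}{r^2}} = \frac{x}{2}\mu$. Let $U = \mathbb{C} \setminus \{\mu \in \mathbb{C} : \mu^2 \in [\frac14, +\infty[\}$, and for $\mu \in U$ define the holomorphic function $z_-(\mu) = \frac{1}{2\mu}\big[1 - \sqrt{1-4\mu^2}\big]$, with the principal determination of the square root on $U$; it satisfies $z_-(0)=0$, $z_-'(0)=1$, $z_-^2 - \frac{z_-}{\mu} + 1 = 0$, and $|z_-(\mu)|<1$ on $U$. At $\mu=0$ (i.e. $x=0$) the quotient $\frac{z_-(\mu)}{\mu}$ is understood as its limit value $1$; in that case $\delta=0$, $p=\mathrm{Id}$ and $q=0$. *)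

(* Defs.v *)
From Stdlib Require Import Reals.
From Coquelicot Require Import Coquelicot.
Open Scope C_scope.

Definition r_const : R := (sqrt 2 / 3)%R.

Definition mu (x : C) : C := 2 * x / (1 + x ^ 2 / RtoC (r_const ^ 2)).
Definition delta (x : C) : C := x ^ 2 / (1 + x ^ 2 / RtoC (r_const ^ 2)).

(** Principal determination of the square root on C
    (real part >= 0; on the negative real axis the value i*sqrt|w|). *)
Definition Csqrt (w : C) : C :=
  let u := Re w in let v := Im w in let m := Cmod w in
  (sqrt ((m + u) / 2),
   if Rlt_dec v 0 then (- sqrt ((m - u) / 2))%R else sqrt ((m - u) / 2)).

Definition zminus (m : C) : C :=
  if Ceq_dec m 0 then 0 else (1 - Csqrt (1 - 4 * m ^ 2)) / (2 * m).

Definition zm_over_mu (m : C) : C :=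
  if Ceq_dec m 0 then 1 else zminus m / m.

(** A function holomorphic in |z| < 1 is represented by its Taylor
    coefficients F, with f(z) = sum_n F n z^n converging for |z| < 1. *)
Definition holo_disc (F : nat -> C) : Prop :=
  forall z : C, Cmod z < 1 -> ex_series (fun n => F n * z ^ n).

Definition psum_is (F : nat -> C) (z s : C) : Prop :=
  is_series (fun n => F n * z ^ n) s.

(** p(f)(z) = [1 - mu z - mu/z] f(z) + (mu/z - 5 delta) f(0),
    evaluated at z <> 0, where fz = f(z) and f(0) = F 0. *)
Definition p_op (x : C) (F : nat -> C) (z fz : C) : C :=
  (1 - mu x * z - mu x / z) * fz + (mu x / z - 5 * delta x) * F 0%nat.

(** q(f) = - sqrt 2 * delta * (d/dz f)(0), and (d/dz f)(0) = F 1. *)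
Definition q_op (x : C) (F : nat -> C) : C :=
  - RtoC (sqrt 2) * delta x * F 1%nat.

(** The system p(f) - q(g) = alpha, -q(f) + p(g) = beta on |z| < 1
    (checked at z <> 0; at z = 0 it follows by continuity). *)
Definition solves_system (x alpha beta : C) (F G : nat -> C) : Prop :=
  forall z fz gz : C, (0 < Cmod z)%R -> Cmod z < 1 ->
    psum_is F z fz -> psum_is G z gz ->
    p_op x F z fz - q_op x G = alpha /\ - q_op x F + p_op x G z gz = beta.

Definition solves_ab (x alpha beta a b : C) : Prop :=
  let zq := zm_over_mu (mu x) in
  let zm := zminus (mu x) in
  let d := 1 - 5 * delta x * zq in
  let o := RtoC (sqrt 2) * delta x * (zm * zq) in
  d * a + o * b = alpha /\ o * a + d * b = beta.

(* Main.v *)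
Require Import Defs.
From Stdlib Require Import Reals Lra.
From Coquelicot Require Import Coquelicot.
Open Scope C_scope.
From Stdlib Require Import FunctionalExtensionality.

Lemma Csqrt_sq (u : C) : Csqrt u * Csqrt u = u.
Proof.
  destruct u as [a b]. unfold Csqrt, Re, Im. simpl fst; simpl snd.
  set (mm := Cmod (a, b)).
  assert (Hm2 : (mm * mm = a * a + b * b)%R).
  { pose proof (Cmod2_alt (a, b)) as H. unfold mm. simpl in H. simpl. nra. }
  assert (Hma : (Rabs a <= mm)%R).
  { pose proof (Rmax_Cmod (a, b)) as H. simpl in H. unfold mm.
    eapply Rle_trans; [apply Rmax_l|exact H]. }
  pose proof (Rabs_pos a).
  assert (H1 : (0 <= (mm + a) / 2)%R) by (pose proof (Rle_abs (-a)); rewrite Rabs_Ropp in *; lra).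
  assert (H2 : (0 <= (mm - a) / 2)%R) by (pose proof (Rle_abs a); lra).
  set (P := sqrt ((mm + a) / 2)). set (Q := sqrt ((mm - a) / 2)).
  assert (HP : (P * P = (mm + a) / 2)%R) by (apply sqrt_sqrt; exact H1).
  assert (HQ : (Q * Q = (mm - a) / 2)%R) by (apply sqrt_sqrt; exact H2).
  assert (HP0 : (0 <= P)%R) by apply sqrt_pos.
  assert (HQ0 : (0 <= Q)%R) by apply sqrt_pos.
  assert (HPQ : (2 * P * Q = Rabs b)%R).
  { rewrite <- (sqrt_Rsqr (2 * P * Q)) by nra. rewrite <- sqrt_Rsqr_abs. f_equal.
    unfold Rsqr. replace (2 * P * Q * (2 * P * Q))%R with (4 * (P * P) * (Q * Q))%R by ring.
    rewrite HP, HQ. nra. }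
  destruct (Rlt_dec b 0) as [Hb|Hb].
  - rewrite Rabs_left in HPQ by exact Hb.
    unfold Cmult; simpl. f_equal; nra.
  - rewrite Rabs_right in HPQ by lra.
    unfold Cmult; simpl. f_equal; nra.
Qed.

Lemma Csqrt_Re (u : C) : (0 <= Re (Csqrt u))%R.
Proof. unfold Csqrt. simpl. apply sqrt_pos. Qed.
Lemma div_le_helper (N D D0 : R) : (0 <= N)%R -> (0 < D0)%R -> (D0 <= D)%R -> (N / D <= N / D0)%R.
Proof.
  intros HN HD0 HD. unfold Rdiv. apply Rmult_le_compat_l; [exact HN|].
  apply Rinv_le_contravar; assumption.
Qed.

Lemma Cmod_lower (A B : C) : (Cmod A - Cmod B <= Cmod (A + B))%R.
Proof.
  pose proof (Cmod_triangle (A + B) (- B)) as H. rewrite Cmod_opp in H.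
  replace (A + B + - B) with A in H by ring. lra.
Qed.

Lemma r2 : (r_const ^ 2 = 2 / 9)%R.
Proof. unfold r_const. simpl. rewrite Rmult_1_r.
  replace (sqrt 2 / 3 * (sqrt 2 / 3))%R with (sqrt 2 * sqrt 2 / 9)%R by field.
  rewrite sqrt_sqrt by lra. reflexivity. Qed.

Lemma x_bounds (x : C) : (Cmod x < / 10)%R ->
  (Cmod (mu x) <= / 4)%R /\ (Cmod (delta x) <= / 50)%R /\ (mu x = 0 -> delta x = 0).
Proof.
  intros Hx.
  set (Dn := 1 + x ^ 2 / RtoC (r_const ^ 2)).
  assert (HX : (Cmod (x ^ 2 / RtoC (r_const ^ 2)) <= 9 / 200)%R).
  { rewrite r2. rewrite Cmod_div.
    2:{ intros E. apply RtoC_inj in E. lra. }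
    rewrite Cmod_pow, Cmod_R, Rabs_right by lra.
    pose proof (Cmod_ge_0 x). simpl. nra. }
  assert (HD : (191 / 200 <= Cmod Dn)%R).
  { unfold Dn.
    pose proof (Cmod_triangle (1 + x ^ 2 / RtoC (r_const ^ 2)) (- (x ^ 2 / RtoC (r_const ^ 2)))) as H3.
    rewrite Cmod_opp in H3. replace (1 + x ^ 2 / RtoC (r_const ^ 2) + - (x ^ 2 / RtoC (r_const ^ 2))) with (RtoC 1) in H3 by ring.
    rewrite Cmod_1 in H3. lra. }
  assert (HDn : Dn <> 0).
  { intros E. rewrite E, Cmod_0 in HD. lra. }
  pose proof (Cmod_ge_0 x) as Hx0.
  split; [|split].
  - unfold mu. fold Dn. rewrite Cmod_div by exact HDn. rewrite Cmod_mult, Cmod_R, Rabs_right by lra.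
    eapply Rle_trans; [apply (div_le_helper _ _ (191/200)); lra|]. lra.
  - unfold delta. fold Dn. rewrite Cmod_div by exact HDn. rewrite Cmod_pow.
    eapply Rle_trans; [apply (div_le_helper _ _ (191/200)); try lra; apply pow_le; lra|].
    simpl. nra.
  - unfold mu, delta. fold Dn. intros E.
    assert (Ex : x = 0).
    { assert (E2 : 2 * x = 0).
      { replace (2 * x) with (2 * x / Dn * Dn) by (field; exact HDn). rewrite E. ring. }
      replace x with (/ 2 * (2 * x)) by (field; intros F; apply RtoC_inj in F; lra).
      rewrite E2. ring. }
    rewrite Ex. field. exact HDn.
Qed.
Lemma C2nz : (2:C) <> 0.
Proof. intros E. apply RtoC_inj in E. lra. Qed.

Ltac fs := field; repeat split; try assumption; try exact C2nz; try (intros Fz; apply RtoC_inj in Fz; lra).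
Lemma m_facts (m : C) : (Cmod m <= / 4)%R ->
  ((m = 0 /\ zminus m = 0 /\ zm_over_mu m = 1) \/
   (m <> 0 /\ zminus m <> 0 /\ 1 + zminus m ^ 2 <> 0 /\
    m = zminus m / (1 + zminus m ^ 2) /\ zm_over_mu m = zminus m / m)) /\
  (Cmod (zminus m) <= / 2)%R /\ (Cmod (zm_over_mu m) <= 2)%R.
Proof.
  intros Hm.
  destruct (Ceq_dec m 0) as [E|Hm0].
  - subst m. unfold zminus, zm_over_mu. destruct (Ceq_dec 0 0) as [_|F]; [|now exfalso].
    split; [left; auto|]. rewrite Cmod_0, Cmod_1. lra.
  - set (s := Csqrt (1 - 4 * m ^ 2)).
    assert (Hs : s * s = 1 - 4 * m ^ 2) by apply Csqrt_sq.
    assert (HRe : (0 <= Re s)%R) by apply Csqrt_Re.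
    assert (H1s : (1 <= Cmod (1 + s))%R).
    { pose proof (Rmax_Cmod (1 + s)) as H. eapply Rle_trans; [|exact H].
      eapply Rle_trans; [|apply Rmax_l]. change (fst (1 + s)) with (1 + fst s)%R. unfold Re in HRe.
      rewrite Rabs_right; lra. }
    assert (H1s0 : 1 + s <> 0).
    { intros E. rewrite E, Cmod_0 in H1s. lra. }
    assert (Hw : zminus m = 2 * m / (1 + s)).
    { unfold zminus. destruct (Ceq_dec m 0) as [F|_]; [now exfalso|]. fold s.
      apply Ceq_minus.
      replace ((1 - s) / (2 * m) - 2 * m / (1 + s)) with ((1 - s * s - 4 * m ^ 2) / (2 * m * (1 + s))).
      2:{ fs. }
      rewrite Hs. fs. }
    assert (Hq : zm_over_mu m = zminus m / m).
    { unfold zm_over_mu. destruct (Ceq_dec m 0) as [F|_]; [now exfalso|reflexivity]. }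
    assert (Hkey : m * (1 + zminus m ^ 2) = zminus m).
    { unfold zminus. destruct (Ceq_dec m 0) as [F|_]; [now exfalso|]. fold s.
      apply Ceq_minus.
      replace (m * (1 + ((1 - s) / (2 * m)) ^ 2) - (1 - s) / (2 * m)) with ((s * s - (1 - 4 * m ^ 2)) / (4 * m)).
      2:{ fs. }
      rewrite Hs. fs. }
    assert (Hwnz : zminus m <> 0).
    { rewrite Hw. intros E.
      assert (E2 : m = 0).
      { replace m with (2 * m / (1 + s) * (1 + s) / 2) by fs.
        rewrite E. fs. }
      exact (Hm0 E2). }
    assert (Hw2 : 1 + zminus m ^ 2 <> 0).
    { intros E. rewrite E, Cmult_0_r in Hkey. exact (Hwnz (eq_sym Hkey)). }
    split.
    + right. repeat split; try assumption.
      transitivity (m * (1 + zminus m ^ 2) / (1 + zminus m ^ 2)); [fs|].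
      rewrite Hkey. reflexivity.
    + pose proof (Cmod_ge_0 m). split.
      * rewrite Hw, Cmod_div by exact H1s0. rewrite Cmod_mult, Cmod_R, Rabs_right by lra.
        eapply Rle_trans; [apply (div_le_helper _ _ 1); lra|]. lra.
      * rewrite Hq, Hw. replace (2 * m / (1 + s) / m) with (2 / (1 + s)) by fs.
        rewrite Cmod_div by exact H1s0. rewrite Cmod_R, Rabs_right by lra.
        eapply Rle_trans; [apply (div_le_helper _ _ 1); lra|]. lra.
Qed.
Lemma CS_ext (a b : nat -> C) (l l' : C) :
  (forall n, a n = b n) -> l = l' -> is_series a l -> is_series b l'.
Proof. intros H E Ha; subst l'; exact (is_series_ext a b l H Ha). Qed.

Lemma CS_plus (a b : nat -> C) la lb :
  is_series a la -> is_series b lb -> is_series (fun n => a n + b n) (la + lb).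
Proof. intros Ha Hb; exact (is_series_plus a b la lb Ha Hb). Qed.

Lemma CS_scal (k : C) (a : nat -> C) l :
  is_series a l -> is_series (fun n => k * a n) (k * l).
Proof. intros Ha; exact (is_series_scal k a l Ha). Qed.

Lemma CS_unique (a : nat -> C) l l' : is_series a l -> is_series a l' -> l = l'.
Proof. intros H1 H2. exact (filterlim_locally_unique (sum_n a) l l' H1 H2). Qed.

Lemma sum_n_Re (c : nat -> C) n : sum_n (fun k => Re (c k)) n = Re (sum_n c n).
Proof.
  induction n.
  - rewrite !sum_O; reflexivity.
  - rewrite !sum_Sn, IHn. reflexivity.
Qed.

Lemma sum_n_Im (c : nat -> C) n : sum_n (fun k => Im (c k)) n = Im (sum_n c n).
Proof.
  induction n.
  - rewrite !sum_O; reflexivity.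
  - rewrite !sum_Sn, IHn. reflexivity.
Qed.

Lemma Re_series (c : nat -> C) l : is_series c l -> is_series (fun n => Re (c n)) (Re l).
Proof.
  intros H. unfold is_series.
  apply filterlim_ext with (fun n => Re (sum_n c n)).
  { intros n; now rewrite sum_n_Re. }
  apply filterlim_comp with (1 := H).
  intros P [eps HP]. exists eps. intros y [Hy _]. apply HP. exact Hy.
Qed.

Lemma Im_series (c : nat -> C) l : is_series c l -> is_series (fun n => Im (c n)) (Im l).
Proof.
  intros H. unfold is_series.
  apply filterlim_ext with (fun n => Im (sum_n c n)).
  { intros n; now rewrite sum_n_Im. }
  apply filterlim_comp with (1 := H).
  intros P [eps HP]. exists eps. intros y [_ Hy]. apply HP. exact Hy.
Qed.

Lemma Cmod_le_ReIm (c : C) : (Cmod c <= Rabs (Re c) + Rabs (Im c))%R.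
Proof.
  destruct c as [a b]. unfold Cmod, Re, Im; simpl.
  apply Rsqr_incr_0_var.
  - rewrite Rsqr_sqrt by nra. unfold Rsqr.
    pose proof (Rabs_pos a); pose proof (Rabs_pos b).
    assert (a*a = Rabs a * Rabs a)%R by (rewrite <- Rabs_mult; rewrite Rabs_right; nra).
    assert (b*b = Rabs b * Rabs b)%R by (rewrite <- Rabs_mult; rewrite Rabs_right; nra).
    nra.
  - pose proof (Rabs_pos a); pose proof (Rabs_pos b); lra.
Qed.

Lemma terms_to_0 (c : nat -> C) l : is_series c l -> is_lim_seq (fun n => Cmod (c n)) 0%R.
Proof.
  intros H.
  assert (H1 := ex_series_lim_0 _ (ex_intro _ _ (Re_series c l H))).
  assert (H2 := ex_series_lim_0 _ (ex_intro _ _ (Im_series c l H))).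
  apply is_lim_seq_le_le with (fun _ => 0%R) (fun n => Rabs (Re (c n)) + Rabs (Im (c n)))%R.
  - intros n; split; [apply Cmod_ge_0 | apply Cmod_le_ReIm].
  - apply is_lim_seq_const.
  - assert (A1 : is_lim_seq (fun n => Rabs (Re (c n))) 0%R).
    { apply -> is_lim_seq_abs_0; assumption. }
    assert (A2 : is_lim_seq (fun n => Rabs (Im (c n))) 0%R).
    { apply -> is_lim_seq_abs_0; assumption. }
    replace 0%R with (0 + 0)%R by lra.
    apply is_lim_seq_plus'; assumption.
Qed.

Lemma C_lim_of_Cmod (s : nat -> C) (l : C) :
  is_lim_seq (fun n => Cmod (s n - l)) 0%R -> filterlim s eventually (locally l).
Proof.
  intros H P [eps HP].
  assert (Hev : eventually (fun n => Rabs (Cmod (s n - l) - 0) < eps)%R).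
  { apply (H (fun y => Rabs (y - 0) < eps)%R). exists eps. intros y Hy. exact Hy. }
  destruct Hev as [N HN]. exists N. intros n Hn. apply HP.
  specialize (HN n Hn). rewrite Rminus_0_r, Rabs_right in HN by apply Rle_ge, Cmod_ge_0.
  pose proof (Rmax_Cmod (s n - l)) as HM.
  split; simpl; unfold AbsRing_ball, abs, minus, plus, opp; simpl.
  - eapply Rle_lt_trans; [|exact HN]. eapply Rle_trans; [|exact HM]. apply Rmax_l.
  - eapply Rle_lt_trans; [|exact HN]. eapply Rle_trans; [|exact HM]. apply Rmax_r.
Qed.
Close Scope C_scope.
Lemma to_pseries (u : nat -> R) t l :
  is_series (fun n => u n * t ^ n)%R l -> is_pseries u t l.
Proof.
  intros H. unfold is_pseries. revert H. apply is_series_ext.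
  intros n. transitivity (mult (pow_n t n) (u n)). 2: reflexivity.
  rewrite (pow_n_pow t n). exact (Rmult_comm _ _).
Qed.

Lemma id_R0 (u : nat -> R) :
  (forall t, 0 < t < 1 -> is_series (fun n => u n * t ^ n)%R 0%R) -> u 0%nat = 0%R.
Proof.
  intros H.
  assert (Hl : is_lim_seq (fun n => u n * (/2) ^ n)%R 0%R).
  { apply ex_series_lim_0. eexists. apply H. lra. }
  assert (HR : Rbar_le (Rabs (/2)) (CV_radius u)).
  { apply Rbar_not_lt_le. intros Hc. exact (CV_disk_outside u (/2) Hc Hl). }
  assert (HR0 : Rbar_lt (Rabs 0) (CV_radius u)).
  { rewrite Rabs_R0. eapply Rbar_lt_le_trans; [|exact HR].
    simpl. rewrite Rabs_right; lra. }
  pose proof (PSeries_continuity u 0 HR0) as Hc.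
  rewrite <- (PSeries_0 u).
  destruct (Req_dec (PSeries u 0) 0) as [E|E]; [exact E|exfalso].
  destruct (Hc (Rabs (PSeries u 0))) as [alp [Halp Hd]].
  { apply Rabs_pos_lt; exact E. }
  set (t := Rmin (alp/2) (/2)).
  assert (Ht : 0 < t < 1).
  { unfold t; split; [apply Rmin_glb_lt; lra|]. eapply Rle_lt_trans; [apply Rmin_r|lra]. }
  assert (Hp : PSeries u t = 0%R).
  { apply is_pseries_unique. apply to_pseries. apply H. exact Ht. }
  specialize (Hd t). simpl in Hd. unfold R_dist in Hd. rewrite Hp in Hd.
  assert (Rabs (0 - PSeries u 0) < Rabs (PSeries u 0)).
  { apply Hd. split; [split; [exact I| lra]|].
    rewrite Rminus_0_r, Rabs_right by lra. unfold t. eapply Rle_lt_trans; [apply Rmin_l|lra]. }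
  rewrite Rminus_0_l, Rabs_Ropp in H0. lra.
Qed.

Lemma id_R (k : nat) : forall (u : nat -> R),
  (forall t, 0 < t < 1 -> is_series (fun n => u n * t ^ n)%R 0%R) -> u k = 0%R.
Proof.
  induction k as [|k IH]; intros u H.
  - exact (id_R0 u H).
  - assert (H0 := id_R0 u H).
    change (u (S k)) with (PS_decr_1 u k).
    apply IH. intros t Ht.
    assert (Hp := is_pseries_decr_1 u t (/t) 0%R (Rinv_l t ltac:(lra)) (to_pseries u t 0%R (H t Ht))).
    unfold is_pseries in Hp.
    match type of Hp with is_series _ ?v => assert (E : v = 0%R) end.
    { rewrite H0. change (/ t * (0 + - 0) = 0)%R. ring. }
    rewrite E in Hp.
    revert Hp. apply is_series_ext.
    + intros n. transitivity (mult (pow_n t n) (PS_decr_1 u n)). 1: reflexivity.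
      rewrite (pow_n_pow t n). exact (Rmult_comm _ _).
Qed.
Open Scope C_scope.
Lemma id_C (c : nat -> C) :
  (forall t : R, (0 < t < 1)%R -> is_series (fun n => c n * RtoC t ^ n) (0:C)) -> forall n, c n = 0.
Proof.
  intros H n.
  assert (HRe : Re (c n) = 0%R).
  { apply (id_R n (fun k => Re (c k))). intros t Ht.
    eapply is_series_ext; [|apply (Re_series _ _ (H t Ht))].
    intros k. cbv beta. rewrite <- RtoC_pow. destruct (c k) as [p q]. simpl. ring. }
  assert (HIm : Im (c n) = 0%R).
  { apply (id_R n (fun k => Im (c k))). intros t Ht.
    eapply is_series_ext; [|apply (Im_series _ _ (H t Ht))].
    intros k. cbv beta. rewrite <- RtoC_pow. destruct (c k) as [p q]. simpl. ring. }
  destruct (c n) as [p q]. simpl in HRe, HIm. subst. reflexivity.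
Qed.

Definition shift (c : nat -> C) (n : nat) : C :=
  match n with O => 0 | S k => c k end.

Lemma shift_series (c : nat -> C) z l :
  is_series (fun n => c n * z ^ n) l -> is_series (fun n => shift c n * z ^ n) (z * l).
Proof.
  intros H. apply is_series_decr_1.
  eapply CS_ext; [| |apply (CS_scal z _ _ H)].
  - intros n. simpl. ring.
  - change (z * l = z * l + - (0 * 1)). ring.
Qed.

Lemma is_series_zero : is_series (fun _ : nat => (0:C)) (0:C).
Proof.
  unfold is_series. apply filterlim_ext with (fun _ => (0:C)).
  - intros n. induction n.
    + rewrite sum_O. reflexivity.
    + rewrite sum_Sn, <- IHn. change ((0:C) = (0:C) + (0:C)). ring.
  - apply filterlim_const.
Qed.

Definition fin2 (k0 k1 : C) (n : nat) : C :=
  match n with O => k0 | 1%nat => k1 | _ => 0 end.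

Lemma fin2_series k0 k1 z : is_series (fun n => fin2 k0 k1 n * z ^ n) (k0 + k1 * z).
Proof.
  apply is_series_decr_1. apply is_series_decr_1.
  eapply CS_ext; [| |apply is_series_zero].
  - intros n. simpl. ring.
  - change ((0:C) = k0 + k1 * z + - (k0 * 1) + - (k1 * (z * 1))). ring.
Qed.

Lemma sum_geom_C (u : C) n : sum_n (fun k => u ^ k) n * (1 - u) = 1 - u ^ (S n).
Proof.
  induction n.
  - rewrite sum_O. simpl. ring.
  - rewrite sum_Sn. change ((sum_n (fun k => u ^ k) n + u ^ S n) * (1 - u) = 1 - u ^ S (S n)).
    rewrite Cmult_plus_distr_r, IHn. simpl. ring.
Qed.

Lemma geom_C (u : C) : (Cmod u < 1)%R -> is_series (fun n => u ^ n) (/ (1 - u)).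
Proof.
  intros Hu.
  assert (Hnz : 1 - u <> 0).
  { intros E. assert (u = 1) by (apply (f_equal (fun v => 1 - v)) in E;
       replace (1 - (1 - u)) with u in E by ring; rewrite E; ring).
    subst u. rewrite Cmod_1 in Hu. lra. }
  unfold is_series. apply C_lim_of_Cmod.
  apply is_lim_seq_ext with (fun n => (Cmod u ^ S n) * / Cmod (1 - u))%R.
  - intros n.
    assert (E : sum_n (fun k => u ^ k) n - / (1 - u) = - (u ^ S n) / (1 - u)).
    { assert (E0 : sum_n (fun k => u ^ k) n = (1 - u ^ S n) / (1 - u)).
      { assert (G : forall Sm : C, Sm * (1 - u) = 1 - u ^ S n -> Sm = (1 - u ^ S n) / (1 - u)).
        { intros Sm HS. rewrite <- HS. field. exact Hnz. }
        apply G. apply sum_geom_C. }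
      rewrite E0. field. exact Hnz. }
    match goal with |- context [Cmod ?X] => replace X with (- u ^ S n / (1 - u)) by (symmetry; exact E) end.
    rewrite Cmod_div by exact Hnz. rewrite Cmod_opp, Cmod_pow. reflexivity.
  - replace 0%R with (0 * / Cmod (1 - u))%R by ring.
    apply is_lim_seq_mult'; [|apply is_lim_seq_const].
    apply (is_lim_seq_incr_1 (fun n => Cmod u ^ n)%R).
    apply is_lim_seq_geom. rewrite Rabs_right; [exact Hu|apply Rle_ge, Cmod_ge_0].
Qed.
Definition SYS (m d c2 al be : C) (F G : nat -> C) : Prop :=
  forall z fz gz : C, (0 < Cmod z)%R -> (Cmod z < 1)%R ->
    psum_is F z fz -> psum_is G z gz ->
    (1 - m * z - m / z) * fz + (m / z - 5 * d) * F 0%nat - (- c2 * d * G 1%nat) = al /\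
    - (- c2 * d * F 1%nat) + ((1 - m * z - m / z) * gz + (m / z - 5 * d) * G 0%nat) = be.

Definition AB (d w zq c2 al be a b : C) : Prop :=
  (1 - 5 * d * zq) * a + (c2 * d * (w * zq)) * b = al /\
  (c2 * d * (w * zq)) * a + (1 - 5 * d * zq) * b = be.

Definition HCASE (m d w zq : C) : Prop :=
  (m = 0 /\ d = 0 /\ w = 0 /\ zq = 1) \/
  (m <> 0 /\ w <> 0 /\ 1 + w ^ 2 <> 0 /\ m = w / (1 + w ^ 2) /\ zq = w / m).

Lemma nz_helper (A B : C) : (Cmod A <= / 5)%R -> (Cmod B <= / 25)%R -> 1 - A + B <> 0.
Proof.
  intros HA HB E.
  pose proof (Cmod_triangle A (- B)) as H. rewrite Cmod_opp in H.
  replace (A + - B) with (RtoC 1) in H.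
  - rewrite Cmod_1 in H. lra.
  - apply Ceq_minus. rewrite <- E. ring.
Qed.

Lemma det_nz (d w zq c2 : C) : (Cmod w <= / 2)%R -> (Cmod zq <= 2)%R -> (Cmod d <= / 50)%R -> (Cmod c2 <= 2)%R ->
  (1 - 5 * d * zq) - (c2 * d * (w * zq)) <> 0 /\ (1 - 5 * d * zq) + (c2 * d * (w * zq)) <> 0.
Proof.
  intros Hw Hzq Hd Hc.
  pose proof (Cmod_ge_0 w); pose proof (Cmod_ge_0 zq); pose proof (Cmod_ge_0 d); pose proof (Cmod_ge_0 c2).
  assert (HA : (Cmod (5 * d * zq) <= / 5)%R).
  { rewrite !Cmod_mult, Cmod_R, Rabs_right by lra.
    assert (Cmod d * Cmod zq <= /50 * 2)%R by (apply Rmult_le_compat; lra). nra. }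
  assert (HB : (Cmod (c2 * d * (w * zq)) <= / 25)%R).
  { rewrite !Cmod_mult.
    assert (Cmod w * Cmod zq <= /2 * 2)%R by (apply Rmult_le_compat; lra).
    assert (Cmod c2 * Cmod d <= 2 * /50)%R by (apply Rmult_le_compat; lra).
    assert (0 <= Cmod w * Cmod zq)%R by nra.
    assert (0 <= Cmod c2 * Cmod d)%R by nra.
    assert (Cmod c2 * Cmod d * (Cmod w * Cmod zq) <= 2 * /50 * (/2 * 2))%R by (apply Rmult_le_compat; lra).
    lra. }
  split.
  - replace (1 - 5 * d * zq - c2 * d * (w * zq)) with (1 - 5 * d * zq + - (c2 * d * (w * zq))) by ring.
    apply nz_helper; [exact HA|]. rewrite Cmod_opp. exact HB.
  - apply nz_helper; assumption.
Qed.

Lemma ab_formula (d w zq c2 al be a b : C) :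
  (1 - 5 * d * zq) - (c2 * d * (w * zq)) <> 0 -> (1 - 5 * d * zq) + (c2 * d * (w * zq)) <> 0 ->
  AB d w zq c2 al be a b ->
  a = ((1 - 5 * d * zq) * al - (c2 * d * (w * zq)) * be) /
        (((1 - 5 * d * zq) - (c2 * d * (w * zq))) * ((1 - 5 * d * zq) + (c2 * d * (w * zq)))) /\
  b = ((1 - 5 * d * zq) * be - (c2 * d * (w * zq)) * al) /
        (((1 - 5 * d * zq) - (c2 * d * (w * zq))) * ((1 - 5 * d * zq) + (c2 * d * (w * zq)))).
Proof.
  intros H1 H2 [E1 E2]. rewrite <- E1, <- E2. split; field; split; assumption.
Qed.

Lemma ab_exists (d w zq c2 al be : C) :
  (1 - 5 * d * zq) - (c2 * d * (w * zq)) <> 0 -> (1 - 5 * d * zq) + (c2 * d * (w * zq)) <> 0 ->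
  exists! ab : C * C, AB d w zq c2 al be (fst ab) (snd ab).
Proof.
  intros H1 H2.
  exists (((1 - 5 * d * zq) * al - (c2 * d * (w * zq)) * be) /
        (((1 - 5 * d * zq) - (c2 * d * (w * zq))) * ((1 - 5 * d * zq) + (c2 * d * (w * zq)))),
          ((1 - 5 * d * zq) * be - (c2 * d * (w * zq)) * al) /
        (((1 - 5 * d * zq) - (c2 * d * (w * zq))) * ((1 - 5 * d * zq) + (c2 * d * (w * zq))))).
  split.
  - unfold AB; simpl. split; field; split; assumption.
  - intros [a b] Hab. simpl in Hab. destruct (ab_formula _ _ _ _ _ _ _ _ H1 H2 Hab) as [Ea Eb].
    simpl. rewrite Ea, Eb. reflexivity.
Qed.

Lemma Cpow_mult_distr (u v : C) n : (u * v) ^ n = u ^ n * v ^ n.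
Proof. induction n; simpl; [ring|rewrite IHn; ring]. Qed.

Lemma Fe_psum (w zq a z : C) : (Cmod w <= / 2)%R -> (Cmod z < 1)%R ->
  psum_is (fun n => a * zq * w ^ n) z (a * zq / (1 - z * w)).
Proof.
  intros Hw Hz. unfold psum_is.
  assert (Hwz : (Cmod (w * z) < 1)%R).
  { rewrite Cmod_mult. pose proof (Cmod_ge_0 w); pose proof (Cmod_ge_0 z). nra. }
  eapply CS_ext; [| |apply (CS_scal (a * zq) _ _ (geom_C _ Hwz))].
  - intros n. cbv beta. rewrite Cpow_mult_distr. ring.
  - unfold Cdiv. rewrite (Cmult_comm w z). reflexivity.
Qed.

Lemma Fe_holo (w zq a : C) : (Cmod w <= / 2)%R -> holo_disc (fun n => a * zq * w ^ n).
Proof. intros Hw z Hz. eexists. apply (Fe_psum w zq a z Hw Hz). Qed.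

Lemma one_minus_nz (z w : C) : (Cmod w <= / 2)%R -> (Cmod z < 1)%R -> 1 - z * w <> 0.
Proof.
  intros Hw Hz E.
  assert (H : z * w = 1).
  { replace (z * w) with (1 - (1 - z * w)) by ring. rewrite E. ring. }
  assert (Cmod (z * w) = 1%R) by (rewrite H; apply Cmod_1).
  rewrite Cmod_mult in H0. pose proof (Cmod_ge_0 w); pose proof (Cmod_ge_0 z). nra.
Qed.

Lemma Fe_sys (m d w zq c2 al be a b : C) : HCASE m d w zq -> (Cmod w <= / 2)%R ->
  AB d w zq c2 al be a b ->
  SYS m d c2 al be (fun n => a * zq * w ^ n) (fun n => b * zq * w ^ n).
Proof.
  intros HC Hw [E1 E2] z fz gz Hz0 Hz1 Hf Hg.
  assert (Hz : z <> 0) by (intros E; rewrite E, Cmod_0 in Hz0; lra).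
  assert (Hzw := one_minus_nz z w Hw Hz1).
  rewrite (CS_unique _ _ _ Hf (Fe_psum w zq a z Hw Hz1)).
  rewrite (CS_unique _ _ _ Hg (Fe_psum w zq b z Hw Hz1)).
  rewrite <- E1, <- E2. simpl.
  destruct HC as [[-> [-> [-> ->]]] | [Hm [Hw0 [Hw2 [Hmw Hzq]]]]].
  - split; field; repeat split; try assumption.
  - rewrite Hzq. subst m. split; field; repeat split; try assumption.
Qed.
Lemma coef_eqs (m d c2 al g1 : C) (F : nat -> C) :
  (forall t : R, (0 < t < 1)%R -> exists fz, psum_is F (RtoC t) fz /\
      (1 - m * RtoC t - m / RtoC t) * fz + (m / RtoC t - 5 * d) * F 0%nat - (- c2 * d * g1) = al) ->
  F 0%nat - m * F 1%nat + (- (5 * d * F 0%nat) + c2 * d * g1 - al) = 0 /\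
  forall k, F (S k) - m * F k - m * F (S (S k)) = 0.
Proof.
  intros H.
  set (k1 := - (5 * d * F 0%nat) + c2 * d * g1 - al).
  set (h := fun n => shift F n - m * shift (shift F) n - m * F n + fin2 (m * F 0%nat) k1 n).
  assert (Hh : forall n, h n = 0).
  { apply id_C. intros t Ht. destruct (H t Ht) as [fz [Hf Heq]].
    set (z := RtoC t) in *.
    assert (Hz : z <> 0) by (intros E; apply RtoC_inj in E; lra).
    unfold psum_is in Hf.
    pose proof (shift_series F z fz Hf) as A.
    pose proof (shift_series (shift F) z (z * fz) A) as B.
    pose proof (CS_plus _ _ _ _ (CS_plus _ _ _ _ (CS_plus _ _ _ _ A (CS_scal (- m) _ _ B)) (CS_scal (- m) _ _ Hf))
                  (fin2_series (m * F 0%nat) k1 z)) as HS.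
    eapply CS_ext; [| |exact HS].
    - intros n. cbv beta. unfold h. ring.
    - symmetry.
      transitivity (z * ((1 - m * z - m / z) * fz + (m / z - 5 * d) * F 0%nat - (- c2 * d * g1) - al)).
      + rewrite Heq. ring.
      + unfold k1. field. exact Hz. }
  split.
  - pose proof (Hh 1%nat) as E. unfold h in E. cbn [shift fin2] in E. rewrite <- E. unfold k1. ring.
  - intros k. pose proof (Hh (S (S k))) as E. unfold h in E. cbn [shift fin2] in E. rewrite <- E. ring.
Qed.

Lemma rec_solve (m w : C) (F : nat -> C) : w <> 0 -> 1 + w ^ 2 <> 0 -> m = w / (1 + w ^ 2) ->
  (Cmod w < 1)%R -> holo_disc F -> (forall k, F (S k) - m * F k - m * F (S (S k)) = 0) ->
  forall k, F k = F 0%nat * w ^ k.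
Proof.
  intros Hw0 Hw2 Hm Hw1 Hholo Hrec.
  set (E := fun k => F (S k) - w * F k).
  assert (HE : forall k, E (S k) = E k / w).
  { intros k. unfold E. pose proof (Hrec k) as R. subst m.
    apply Ceq_minus.
    transitivity ((F (S k) - w / (1 + w ^ 2) * F k - w / (1 + w ^ 2) * F (S (S k))) * (- (1 + w ^ 2) / w)).
    - field. split; assumption.
    - rewrite R. ring. }
  assert (HEk : forall k, E 0%nat = E k * w ^ k).
  { induction k. - simpl. ring.
    - rewrite IHk, HE. simpl. field. exact Hw0. }
  assert (HE0 : E 0%nat = 0).
  { set (t := Cmod w).
    assert (Ht0 : (0 < t)%R) by (apply Cmod_gt_0; exact Hw0).
    set (z := RtoC t).
    assert (Hz : z <> 0) by (intros Ez; apply RtoC_inj in Ez; lra).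
    assert (Hzt : Cmod z = t) by (unfold z; rewrite Cmod_R, Rabs_right; lra).
    destruct (Hholo z ltac:(rewrite Hzt; exact Hw1)) as [fz Hf].
    pose proof (terms_to_0 _ _ Hf) as Hl.
    set (v := fun n => Cmod (F n * z ^ n)) in Hl.
    assert (Hb : forall k, (Cmod (E 0%nat) <= v (S k) / t + t * v k)%R).
    { intros k.
      assert (Ek : E k * z ^ k = (F (S k) * z ^ (S k)) / z - w * (F k * z ^ k)).
      { unfold E. simpl. field. exact Hz. }
      assert (Hc : Cmod (E 0%nat) = Cmod (E k * z ^ k)).
      { rewrite (HEk k), !Cmod_mult, !Cmod_pow, Hzt. reflexivity. }
      rewrite Hc, Ek.
      pose proof (Cmod_triangle (F (S k) * z ^ (S k) / z) (- (w * (F k * z ^ k)))) as Tr.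
      assert (C1 : Cmod (F (S k) * z ^ (S k) / z) = (Cmod (F (S k) * z ^ (S k)) / t)%R).
      { rewrite Cmod_div by exact Hz. rewrite Hzt. reflexivity. }
      assert (C2 : Cmod (w * (F k * z ^ k)) = (t * Cmod (F k * z ^ k))%R).
      { rewrite Cmod_mult. reflexivity. }
      rewrite Cmod_opp, C1, C2 in Tr.
      unfold v. fold t. unfold Cminus. exact Tr. }
    assert (Hlim : is_lim_seq (fun k => v (S k) / t + t * v k)%R 0%R).
    { replace 0%R with (0 * / t + t * 0)%R by ring.
      apply is_lim_seq_plus'.
      - apply is_lim_seq_mult'; [|apply is_lim_seq_const].
        apply (is_lim_seq_incr_1 v). exact Hl.
      - apply is_lim_seq_mult'; [apply is_lim_seq_const|exact Hl]. }
    pose proof (is_lim_seq_le _ _ _ _ Hb (is_lim_seq_const (Cmod (E 0%nat))) Hlim) as Hle.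
    simpl in Hle. apply Cmod_eq_0. pose proof (Cmod_ge_0 (E 0%nat)). lra. }
  assert (HEz : forall k, E k = 0).
  { induction k; [exact HE0|]. rewrite HE, IHk. field. exact Hw0. }
  induction k.
  - simpl. ring.
  - assert (F (S k) = E k + w * F k) by (unfold E; ring).
    rewrite H, HEz, IHk. simpl. ring.
Qed.
Lemma sol_unique (m d w zq c2 al be a b : C) (F G : nat -> C) :
  HCASE m d w zq -> (Cmod w <= / 2)%R -> (Cmod zq <= 2)%R -> (Cmod d <= / 50)%R -> (Cmod c2 <= 2)%R ->
  AB d w zq c2 al be a b -> holo_disc F -> holo_disc G -> SYS m d c2 al be F G ->
  (forall n, F n = a * zq * w ^ n) /\ (forall n, G n = b * zq * w ^ n).
Proof.
  intros HC Hw Hzq Hd Hc Hab HF HG HS.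
  destruct (det_nz d w zq c2 Hw Hzq Hd Hc) as [N1 N2].
  assert (Ht : forall t : R, (0 < t < 1)%R ->
     exists fz gz, psum_is F (RtoC t) fz /\ psum_is G (RtoC t) gz /\
      (1 - m * RtoC t - m / RtoC t) * fz + (m / RtoC t - 5 * d) * F 0%nat - (- c2 * d * G 1%nat) = al /\
      (1 - m * RtoC t - m / RtoC t) * gz + (m / RtoC t - 5 * d) * G 0%nat - (- c2 * d * F 1%nat) = be).
  { intros t Ht.
    assert (Hzt : Cmod (RtoC t) = t) by (rewrite Cmod_R, Rabs_right; lra).
    destruct (HF (RtoC t) ltac:(rewrite Hzt; lra)) as [fz Hf].
    destruct (HG (RtoC t) ltac:(rewrite Hzt; lra)) as [gz Hg].
    destruct (HS (RtoC t) fz gz ltac:(rewrite Hzt; lra) ltac:(rewrite Hzt; lra) Hf Hg) as [E1 E2].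
    exists fz, gz. split; [exact Hf|split; [exact Hg|split; [exact E1|]]].
    rewrite <- E2. ring. }
  destruct (coef_eqs m d c2 al (G 1%nat) F) as [F1 Frec].
  { intros t Ht0. destruct (Ht t Ht0) as [fz [gz [Hf [_ [E1 _]]]]]. exists fz. split; assumption. }
  destruct (coef_eqs m d c2 be (F 1%nat) G) as [G1 Grec].
  { intros t Ht0. destruct (Ht t Ht0) as [fz [gz [_ [Hg [_ E2]]]]]. exists gz. split; assumption. }
  destruct HC as [[Hm0 [Hd0 [Hw0 Hq0]]] | [Hm [Hw0 [Hw2 [Hmw Hzqe]]]]].
  - subst m d w zq.
    destruct Hab as [E1 E2].
    assert (Ea : a = al) by (rewrite <- E1; ring).
    assert (Eb : b = be) by (rewrite <- E2; ring).
    assert (Fa : F 0%nat = al) by (apply Ceq_minus; rewrite <- F1; ring).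
    assert (Gb : G 0%nat = be) by (apply Ceq_minus; rewrite <- G1; ring).
    split; intros [|k].
    + rewrite Fa, Ea. simpl. ring.
    + assert (Z : F (S k) = 0) by (rewrite <- (Frec k); ring). rewrite Z. simpl. ring.
    + rewrite Gb, Eb. simpl. ring.
    + assert (Z : G (S k) = 0) by (rewrite <- (Grec k); ring). rewrite Z. simpl. ring.
  - assert (Hw1 : (Cmod w < 1)%R) by lra.
    pose proof (rec_solve m w F Hw0 Hw2 Hmw Hw1 HF Frec) as HFs.
    pose proof (rec_solve m w G Hw0 Hw2 Hmw Hw1 HG Grec) as HGs.
    rewrite (HFs 1%nat), (HGs 1%nat) in F1, G1. simpl in F1, G1.
    assert (Hal : F 0%nat - m * (F 0%nat * (w * 1)) - 5 * d * F 0%nat + c2 * d * (G 0%nat * (w * 1)) = al).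
    { apply Ceq_minus. rewrite <- F1. ring. }
    assert (Hbe : G 0%nat - m * (G 0%nat * (w * 1)) - 5 * d * G 0%nat + c2 * d * (F 0%nat * (w * 1)) = be).
    { apply Ceq_minus. rewrite <- G1. ring. }
    assert (Hab' : AB d w zq c2 al be (F 0%nat * m / w) (G 0%nat * m / w)).
    { unfold AB. rewrite <- Hal, <- Hbe, Hzqe. subst m. split; field; repeat split; assumption. }
    destruct (ab_formula _ _ _ _ _ _ _ _ N1 N2 Hab) as [Ea Eb].
    destruct (ab_formula _ _ _ _ _ _ _ _ N1 N2 Hab') as [Ea' Eb'].
    rewrite <- Ea in Ea'. rewrite <- Eb in Eb'.
    split; intros n.
    + rewrite HFs, <- Ea', Hzqe. field. split; assumption.
    + rewrite HGs, <- Eb', Hzqe. field. split; assumption.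
Qed.
Lemma main_abstract (m d w zq c2 : C) :
  HCASE m d w zq -> (Cmod w <= / 2)%R -> (Cmod zq <= 2)%R -> (Cmod d <= / 50)%R -> (Cmod c2 <= 2)%R ->
  forall al be,
    (exists! ab : C * C, AB d w zq c2 al be (fst ab) (snd ab)) /\
    forall a b, AB d w zq c2 al be a b ->
      (exists! FG : (nat -> C) * (nat -> C),
          holo_disc (fst FG) /\ holo_disc (snd FG) /\ SYS m d c2 al be (fst FG) (snd FG)) /\
      (forall F G : nat -> C, holo_disc F -> holo_disc G -> SYS m d c2 al be F G ->
          forall z : C, (Cmod z < 1)%R ->
            psum_is F z (a * zq / (1 - z * w)) /\ psum_is G z (b * zq / (1 - z * w))).
Proof.
  intros HC Hw Hzq Hd Hc al be.
  destruct (det_nz d w zq c2 Hw Hzq Hd Hc) as [N1 N2].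
  split; [exact (ab_exists d w zq c2 al be N1 N2)|].
  intros a b Hab. split.
  - exists (fun n => a * zq * w ^ n, fun n => b * zq * w ^ n). split.
    + simpl. split; [apply Fe_holo; exact Hw|split; [apply Fe_holo; exact Hw|]].
      apply Fe_sys; assumption.
    + intros [F G] [H1 [H2 H3]]. simpl in H1, H2, H3.
      destruct (sol_unique m d w zq c2 al be a b F G HC Hw Hzq Hd Hc Hab H1 H2 H3) as [EF EG].
      f_equal; apply functional_extensionality; intros n; symmetry; auto.
  - intros F G H1 H2 H3 z Hz.
    destruct (sol_unique m d w zq c2 al be a b F G HC Hw Hzq Hd Hc Hab H1 H2 H3) as [EF EG].
    split.
    + eapply CS_ext; [| |apply (Fe_psum w zq a z Hw Hz)]; [intros n; rewrite EF; reflexivity|reflexivity].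
    + eapply CS_ext; [| |apply (Fe_psum w zq b z Hw Hz)]; [intros n; rewrite EG; reflexivity|reflexivity].
Qed.

Theorem lemma7 :
  exists eps : R, (0 < eps)%R /\
  forall x : C, Cmod x < r_const -> Cmod x < eps ->
  forall alpha beta : C,
    (exists! ab : C * C, solves_ab x alpha beta (fst ab) (snd ab)) /\
    forall a b : C, solves_ab x alpha beta a b ->
      (exists! FG : (nat -> C) * (nat -> C),
          holo_disc (fst FG) /\ holo_disc (snd FG) /\
          solves_system x alpha beta (fst FG) (snd FG)) /\
      (forall F G : nat -> C,
          holo_disc F -> holo_disc G -> solves_system x alpha beta F G ->
          forall z : C, Cmod z < 1 ->
            psum_is F z (a * zm_over_mu (mu x) / (1 - z * zminus (mu x))) /\
            psum_is G z (b * zm_over_mu (mu x) / (1 - z * zminus (mu x)))).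
Proof.
  exists (/ 10)%R. split; [lra|].
  intros x _ Hx alpha beta.
  destruct (x_bounds x Hx) as [Hm [Hd Hmd]].
  destruct (m_facts (mu x) Hm) as [HC0 [Hw Hzq]].
  assert (HC : HCASE (mu x) (delta x) (zminus (mu x)) (zm_over_mu (mu x))).
  { destruct HC0 as [[E1 [E2 E3]] | H]; [left; auto | right; exact H]. }
  assert (Hc : (Cmod (RtoC (sqrt 2)) <= 2)%R).
  { rewrite Cmod_R, Rabs_right by (apply Rle_ge, sqrt_pos).
    pose proof (sqrt_pos 2). pose proof (sqrt_sqrt 2 ltac:(lra)). nra. }
  exact (main_abstract (mu x) (delta x) (zminus (mu x)) (zm_over_mu (mu x)) (RtoC (sqrt 2))
           HC Hw Hzq Hd Hc alpha beta).
Qed.
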